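(* Consider a rule of the PJR-Exact family run on $(\mathcal{A},k)$, and fix $j$ with $1\le j\le k$ such that iterations $1,\dots,j$ are all normal. Then for every voter $i\in N$, either $|A_i\cap W_j|\ge \ell_j(i)$ or $f_i^j\ge \frac{\ell_j(i)-|A_i\cap W_j|}{\ell_j(i)}$.
   Context: Setting: voters $N=\{1,\dots,n\}$, candidates $C=\{c_1,\dots,c_m\}$, approval ballots $A_i\subseteq C$, $\mathcal{A}=(A_1,\dots,A_n)$, $k$ a positive integer with $k\le|C|$, $q=n/k$, $N_c=\{i: c\in A_i\}$. Convention: $\max\emptyset=0$. Dissatisfaction level: for $W\subseteq C$ with $|W|\le k$ and $c\in C\setminus W$, $\ell(c,W)$ is the largest nonnegative integer $\ell$ with $\ell=\lfloor \frac{k}{n}|\{i\in N: c\in A_i,\ |A_i\cap W|<\ell\}|\rfloor$. PJR-Exact family: iterative procedures selecting $w_1,\dots,w_k$, $W_0=\emptyset$, $W_j=W_{j-1}\cup\{w_j\}$, $w_j\notin W_{j-1}$, with vote fractions $f_i^0=1$, $0\le f_i^j\le f_i^{j-1}$, such that at each iteration $j$: (a) $f_i^j=f_i^{j-1}$ for $i\notin N_{w_j}$; (b) with $s=\sum_{i\in N_{w_j}}f_i^{j-1}$, if $s>q$ then $\sum_{i\in N_{w_j}}(f_i^{j-1}-f_i^j)=q$, and if $s\le q$ then $f_i^j=0$ for all $i\in N_{w_j}$; (c) if some $c\in C\setminus W_{j-1}$ has $\sum_{i\in N_c}f_i^{j-1}\ge q$ then $\sum_{i\in N_{w_j}}f_i^{j-1}\ge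 q$. Notation along a run: $\ell_j(c)=\ell(c,W_j)$ for $c\in C\setminus W_j$; $\ell_j(i)=\max_{c\in A_i\setminus W_j}\ell_j(c)$; for $c\in C\setminus W_j$ and $i\in N_c$, $\ell_j(i,c)=\max_{c'\in A_i\setminus(W_j\cup\{c\})}\ell_j(c')$; $g_i^j(c)=0$ if $\ell_j(i,c)\le|A_i\cap W_j|$ and $g_i^j(c)=\frac{\ell_j(i,c)-|A_i\cap W_j|-1}{\ell_j(i,c)}$ otherwise. Normal state: $c\in C\setminus W_j$ is in normal state after $j$ iterations if (1) for each $i\in N_c$ with $\ell_j(i,c)>|A_i\cap W_j|$ we have $f_i^j\ge\frac{\ell_j(i,c)-|A_i\cap W_j|}{\ell_j(i,c)}$, and (2) $\sum_{i\in N_c}(f_i^j-g_i^j(c))\ge q$. Normal iteration: iteration $j$ ($1\le j\le k$) is normal if $w_j$ is in normal state after $j-1$ iterations and, for each $i\in N_{w_j}$ with $\ell_{j-1}(i,w_j)>|A_i\cap W_{j-1}|$, $f_i^j\ge\frac{\ell_{j-1}(i,w_j)-|A_i\cap W_j|}{\ell_{j-1}(i,w_j)}$. *)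

(* Defs.v *)
From HB Require Import structures.
From mathcomp Require Import all_boot all_order all_algebra.
Set Implicit Arguments. Unset Strict Implicit. Unset Printing Implicit Defensive.
Import Order.TTheory GRing.Theory Num.Theory.

(* Voters are 'I_n, candidates range over a finite type C,
   A : 'I_n -> {set C} are the approval ballots, k the committee size. *)

Local Open Scope ring_scope.

Definition quota (n k : nat) : rat := n%:R / k%:R.

(* dissatisfaction level l(c,W): the largest l >= 0 with
   l = floor((k/n) * |{i : c in A_i, |A_i cap W| < l}|).
   floor((k/n) x) = (k * x) %/ n; any such l is <= k, so we search l <= k. *)
Definition ell (n k : nat) (C : finType) (A : 'I_n -> {set C})
    (c : C) (W : {set C}) : nat :=
  \max_(l < k.+1 |
        (l : nat) == ((k * #|[set i | (c \in A i) && (#|A i :&: W| < l)%N]|) %/ n)%N)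
     (l : nat).

(* l_j(i) = max_{c in A_i \ W} l(c, W)   (max of empty = 0) *)
Definition ell_voter (n k : nat) (C : finType) (A : 'I_n -> {set C})
    (i : 'I_n) (W : {set C}) : nat :=
  \max_(c in A i :\: W) ell k A c W.

Definition ell_voter_c (n k : nat) (C : finType) (A : 'I_n -> {set C})
    (i : 'I_n) (c : C) (W : {set C}) : nat :=
  \max_(c' in A i :\: (c |: W)) ell k A c' W.

Definition gfun (n k : nat) (C : finType) (A : 'I_n -> {set C})
    (i : 'I_n) (c : C) (W : {set C}) : rat :=
  let l := ell_voter_c k A i c W in
  if (l <= #|A i :&: W|)%N then 0
  else (l%:R - (#|A i :&: W|)%:R - 1) / l%:R.

(* W_j = {w_1, ..., w_j}; w is indexed from 1 (w 0 is unused). *)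
Definition Wset (C : finType) (w : nat -> C) (j : nat) : {set C} :=
  [set w (val t).+1 | t : 'I_j].

(* A run of a rule of the PJR-Exact family: w_1..w_k selected candidates,
   f j i = f_i^j vote fractions. *)
Definition pjr_exact_run (n k : nat) (C : finType) (A : 'I_n -> {set C})
    (w : nat -> C) (f : nat -> 'I_n -> rat) : Prop :=
  (forall i, f 0%N i = 1) /\
  (forall j : nat, (1 <= j <= k)%N ->
     [/\ w j \notin Wset w (j - 1),
         (forall i, 0 <= f j i /\ f j i <= f (j - 1)%N i),
         (forall i, w j \notin A i -> f j i = f (j - 1)%N i),
         (let s := \sum_(i | w j \in A i) f (j - 1)%N i in
            (quota n k < s ->
               \sum_(i | w j \in A i) (f (j - 1)%N i - f j i) = quota n k) /\
            (s <= quota n k -> forall i, w j \in A i -> f j i = 0))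
       &
         ((exists c, c \notin Wset w (j - 1) /\
                     quota n k <= \sum_(i | c \in A i) f (j - 1)%N i) ->
          quota n k <= \sum_(i | w j \in A i) f (j - 1)%N i)]).

Definition normal_state (n k : nat) (C : finType) (A : 'I_n -> {set C})
    (w : nat -> C) (f : nat -> 'I_n -> rat) (j : nat) (c : C) : Prop :=
  let W := Wset w j in
  [/\ c \notin W,
      (forall i, c \in A i -> (#|A i :&: W| < ell_voter_c k A i c W)%N ->
         ((ell_voter_c k A i c W)%:R - (#|A i :&: W|)%:R)
           / (ell_voter_c k A i c W)%:R <= f j i)
    & quota n k <= \sum_(i | c \in A i) (f j i - gfun k A i c W)].

Definition normal_iteration (n k : nat) (C : finType) (A : 'I_n -> {set C})
    (w : nat -> C) (f : nat -> 'I_n -> rat) (j : nat) : Prop :=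
  normal_state k A w f (j - 1) (w j) /\
  (forall i, w j \in A i ->
     (#|A i :&: Wset w (j - 1)| < ell_voter_c k A i (w j) (Wset w (j - 1)))%N ->
     ((ell_voter_c k A i (w j) (Wset w (j - 1)))%:R - (#|A i :&: Wset w j|)%:R)
       / (ell_voter_c k A i (w j) (Wset w (j - 1)))%:R <= f j i).

(* Main.v *)
Require Import Defs.
From HB Require Import structures.
From mathcomp Require Import all_boot all_order all_algebra.
From mathcomp Require Import zify.
Import Order.TTheory GRing.Theory Num.Theory.
Local Open Scope ring_scope.

Lemma WsetS (C : finType) (w : nat -> C) j :
  Wset w j.+1 = w j.+1 |: Wset w j.
Proof.
apply/setP=> x; rewrite !inE; apply/imsetP/predU1P.
- case=> t _ ->; case: (ltnP t j) => h.
    by right; apply/imsetP; exists (Ordinal h).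
  left; have ht : val t = j by apply/eqP; rewrite eqn_leq h -ltnS ltn_ord.
  by rewrite /= ht.
- case=> [->|/imsetP[t _ ->]]; first by exists ord_max.
  by exists (widen_ord (leqnSn j) t).
Qed.

Lemma Wset0 (C : finType) (w : nat -> C) : Wset w 0 = set0.
Proof. by apply/setP=> x; rewrite inE; apply/imsetP=> -[[]]. Qed.

Section Mono.
Variables (n k : nat) (C : finType) (A : 'I_n -> {set C}).

Definition gg (c : C) (W : {set C}) (l : nat) : nat :=
  ((k * #|[set i | (c \in A i) && (#|A i :&: W| < l)%N]|) %/ n)%N.

Lemma gg_le_k c W l : (gg c W l <= k)%N.
Proof.
rewrite /gg; case: n A => [|m] A'.
  by rewrite divn0.
apply: leq_trans (_ : (k * m.+1) %/ m.+1 <= k)%N; last by rewrite mulnK.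
apply: leq_div2r; rewrite leq_mul2l; apply/orP; right.
by apply: leq_trans (max_card _) _; rewrite card_ord.
Qed.

Lemma gg_mono c (W W' : {set C}) l l' : W \subset W' -> (l' <= l)%N -> (gg c W' l' <= gg c W l)%N.
Proof.
move=> sW ll; rewrite /gg; apply: leq_div2r; rewrite leq_mul2l; apply/orP; right.
apply: subset_leq_card; apply/subsetP=> i; rewrite !inE => /andP[-> h] /=.
apply: leq_trans ll; apply: leq_ltn_trans h.
by apply: subset_leq_card; apply: setIS.
Qed.

Lemma ell_ge c W l : (l <= gg c W l)%N -> (l <= ell k A c W)%N.
Proof.
move=> h.
have lk : (l <= k)%N by apply: leq_trans h (gg_le_k _ _ _).
move Hd: (k - l)%N => d; elim: d {-2}d (leqnn d) l h lk Hd => [|d IH] e.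
  rewrite leqn0 => /eqP -> l h lk Hd.
  have el : l = k by lia.
  have fp : l = gg c W l by apply/eqP; rewrite eqn_leq h; rewrite el gg_le_k.
  have lt : (l < k.+1)%N by lia.
  apply: (@leq_bigmax_cond _ _ (fun l0 : 'I_k.+1 => (l0 : nat)) (Ordinal lt)) => /=.
  by apply/eqP; exact fp.
move=> ed l h lk Hd.
case: (eqVneq l (gg c W l)) => fp.
  have lt : (l < k.+1)%N by lia.
  apply: (@leq_bigmax_cond _ _ (fun l0 : 'I_k.+1 => (l0 : nat)) (Ordinal lt)) => /=.
  by apply/eqP; rewrite {1}fp.
have lt : (l < gg c W l)%N by rewrite ltn_neqAle fp h.
apply: leq_trans (ltnW lt) _.
apply: (IH (k - gg c W l)%N); last first.
- by [].
- exact: gg_le_k.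
- exact: gg_mono.
- have := gg_le_k c W l; lia.
Qed.

Lemma ell_anti c (W W' : {set C}) : W \subset W' -> (ell k A c W' <= ell k A c W)%N.
Proof.
move=> sW; apply/bigmax_leqP=> l /eqP h.
apply: ell_ge; rewrite {1}h; exact: gg_mono.
Qed.

End Mono.

Lemma frac_mono (a l L : nat) : (0 < l)%N -> (l <= L)%N ->
  (l%:R - a%:R) / l%:R <= (L%:R - a%:R) / (L%:R : rat).
Proof.
move=> l0 lL.
have L0 : (0 < L)%N by lia.
have e x : (0 < x)%N -> (x%:R - a%:R) / x%:R = 1 - a%:R / (x%:R : rat).
  by move=> x0; rewrite mulrBl divff // pnatr_eq0 -lt0n.
rewrite !e //; apply: lerB => //; apply: ler_wpM2l => //.
by rewrite lef_pV2 ?posrE ?ltr0n // ler_nat.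
Qed.

Theorem mainTheorem3 (n k : nat) (C : finType) (A : 'I_n -> {set C})
    (w : nat -> C) (f : nat -> 'I_n -> rat) (j : nat) :
  (0 < k)%N -> (k <= #|C|)%N ->
  pjr_exact_run k A w f ->
  (1 <= j <= k)%N ->
  (forall t : nat, (1 <= t <= j)%N -> normal_iteration k A w f t) ->
  forall i : 'I_n,
    (ell_voter k A i (Wset w j) <= #|A i :&: Wset w j|)%N \/
    ((ell_voter k A i (Wset w j))%:R - (#|A i :&: Wset w j|)%:R)
      / (ell_voter k A i (Wset w j))%:R <= f j i.
Proof.
move=> _ _ [f0 run] /andP[_ jk] norm.
elim: j jk norm => [|j IH] jk norm i.
  rewrite Wset0 setI0 cards0 f0.
  case: (leqP (ell_voter k A i set0) 0) => h; [by left|right].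
  by rewrite subr0 divff // pnatr_eq0 -lt0n.
have jk' : (j <= k)%N by lia.
have /IH {}IH : forall t, (1 <= t <= j)%N -> normal_iteration k A w f t.
  by move=> t /andP[h1 h2]; apply: norm; rewrite h1 /=; lia.
have := run j.+1; rewrite subSS subn0 => -[]; first by rewrite jk.
move=> wn _ fa _ _.
have [_ nw] := norm j.+1 (leqnn _); rewrite subSS subn0 in nw.
rewrite WsetS.
have ltV : (ell_voter k A i (w j.+1 |: Wset w j) <= ell_voter_c k A i (w j.+1) (Wset w j))%N.
  apply/bigmax_leqP=> c hc.
  apply: leq_trans (@ell_anti n k C A c _ _ (subsetUr [set w j.+1] (Wset w j))) _.
  exact: (@leq_bigmax_cond _ _ (fun c => ell k A c (Wset w j)) c hc).
have ltV2 : (ell_voter k A i (w j.+1 |: Wset w j) <= ell_voter k A i (Wset w j))%N.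
  apply/bigmax_leqP=> c; rewrite !inE negb_or => /andP[/andP[_ h1] h2].
  apply: leq_trans (@ell_anti n k C A c _ _ (subsetUr [set w j.+1] (Wset w j))) _.
  by apply: (@leq_bigmax_cond _ _ (fun c => ell k A c (Wset w j)) c); rewrite !inE h1.
set l' := ell_voter _ _ _ _ in ltV ltV2 *.
case: (boolP (w j.+1 \in A i)) => wA.
  have ea : A i :&: (w j.+1 |: Wset w j) = w j.+1 |: (A i :&: Wset w j).
    by apply/setP=> x; rewrite !inE; case: eqP => // ->; rewrite wA.
  rewrite ea cardsU1 !inE (negbTE wn) andbF /= add1n.
  case: (leqP l' (#|A i :&: Wset w j|).+1) => h; [by left|right].
  have h2 := nw i wA; rewrite WsetS ea cardsU1 !inE (negbTE wn) andbF /= add1n in h2.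
  apply: le_trans (h2 _); last by lia.
  apply: frac_mono => //; lia.
have ea : A i :&: (w j.+1 |: Wset w j) = A i :&: Wset w j.
  by apply/setP=> x; rewrite !inE; case: eqP => // ->; rewrite (negbTE wA).
rewrite ea fa //.
case: (leqP l' #|A i :&: Wset w j|) => h; [by left|right].
case: (IH jk' i) => h2; first by lia.
apply: le_trans h2; apply: frac_mono => //; lia.
Qed.
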